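(* Let $\mathcal{O}$ be the fixed one-counter net described in the context and let the formulas $\varphi_i$ ($i\ge1$) be as defined there. Then for all $n\ge0$ and $i\ge1$: (1) $(t,n)\models\varphi_i$ if and only if $2^i$ divides $n$; (2) $(\bar t,n)\models\varphi_i$ if and only if $2^i$ does not divide $n$.
   Context: A one-counter net is a tuple $(Q,\{Q_p\},\delta_0,\delta_{>0})$ with $\delta_0\subseteq Q\times\{0,1\}\times Q$, $\delta_{>0}\subseteq Q\times\{-1,0,1\}\times Q$ and $\delta_0\subseteq\delta_{>0}$; its transition system has states $Q\times\mathbb{N}$, $(q,n)$ satisfies $p$ iff $q\in Q_p$, and $(q,n)\to(q',n+k)$ iff either $n=0$ and $(q,k,q')\in\delta_0$, or $n>0$ and $(q,k,q')\in\delta_{>0}$. The fixed net $\mathcal{O}$ has control locations $t,\bar t,q_0,q_1,q_2,q_3,f,g,p_0,p_1$; the atomic propositions are the control locations, each holding exactly at itself. $\delta_{>0}$ consists of $(q_0,-1,q_1)$, $(q_1,-1,q_2)$, $(q_2,-1,q_3)$, $(q_3,-1,q_0)$, $(q_1,-1,q_1)$, $(q_3,-1,q_3)$, $(q_0,0,t)$, $(t,0,q_0)$, $(q_2,0,t)$, $(q_1,0,\bar t)$, $(\bar t,0,q_1)$, $(\bar t,0,q_2)$, $(q_3,0,\bar t)$, $(\bar t,0,q_3)$, $(t,0,f)$, $(\bar t,-1,f)$, $(f,-1,g)$, $(g,-1,f)$, $(\bar t,1,p_1)$, $(p_1,1,p_1)$, $(p_1,0,\bar t)$, $(p_0,0,\bar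 t)$, $(\bar t,0,p_0)$; and $\delta_0=\{(\bar t,1,p_1),(p_0,0,\bar t),(\bar t,0,p_0),(t,0,q_0),(t,0,f)\}$. $\mathsf{CTL}$ is interpreted with the standard semantics; $\exists\mathsf{F}\psi$ (written $\mathsf{EF}\psi$) abbreviates $\exists\,\mathtt{true}\,\mathsf{U}\,\psi$, and $\vee$ is defined as usual. Let $\mathrm{test}=t\vee\bar t$, $\varphi_\diamond=q_0\vee q_1\vee q_2\vee q_3$, $\varphi_1=\mathrm{test}\wedge\exists\mathsf{X}\big(f\wedge\mathsf{EF}(f\wedge\neg\exists\mathsf{X}g)\big)$, and for $i>1$: $\mu_i=\exists(\varphi_\diamond\wedge\exists\mathsf{X}\varphi_{i-1})\,\mathsf{U}\,(q_0\wedge\neg\exists\mathsf{X}q_1)$ and $\varphi_i=\mathrm{test}\wedge\exists\mathsf{X}\mu_i$. *)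

(* Defs.v *)
From Stdlib Require Import ZArith List.
Import ListNotations.
Open Scope Z_scope.

Inductive loc : Type := t | tbar | q0 | q1 | q2 | q3 | f | g | p0 | p1.

Definition delta_pos : list (loc * Z * loc) :=
  [ (q0,-1,q1); (q1,-1,q2); (q2,-1,q3); (q3,-1,q0); (q1,-1,q1); (q3,-1,q3);
    (q0,0,t); (t,0,q0); (q2,0,t); (q1,0,tbar); (tbar,0,q1); (tbar,0,q2);
    (q3,0,tbar); (tbar,0,q3); (t,0,f); (tbar,-1,f); (f,-1,g); (g,-1,f);
    (tbar,1,p1); (p1,1,p1); (p1,0,tbar); (p0,0,tbar); (tbar,0,p0) ].

Definition delta_zero : list (loc * Z * loc) :=
  [ (tbar,1,p1); (p0,0,tbar); (tbar,0,p0); (t,0,q0); (t,0,f) ].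

Definition config : Type := (loc * nat)%type.

Definition step (c c' : config) : Prop :=
  let (q, n) := c in let (q', m) := c' in
  exists k : Z, Z.of_nat m = Z.of_nat n + k /\
    ((n = 0%nat /\ In (q, k, q') delta_zero) \/
     (0 < n)%nat /\ In (q, k, q') delta_pos).

Inductive ctl : Type :=
| CTrue : ctl
| Atom : loc -> ctl
| Neg : ctl -> ctl
| And : ctl -> ctl -> ctl
| EX : ctl -> ctl
| EU : ctl -> ctl -> ctl.

Definition Or (a b : ctl) : ctl := Neg (And (Neg a) (Neg b)).
Definition EF (a : ctl) : ctl := EU CTrue a.

Inductive eu (P Q : config -> Prop) : config -> Prop :=
| eu_now : forall s, Q s -> eu P Q s
| eu_step : forall s s', P s -> step s s' -> eu P Q s' -> eu P Q s.

Fixpoint sat (phi : ctl) (s : config) : Prop :=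
  match phi with
  | CTrue => True
  | Atom q => fst s = q
  | Neg a => ~ sat a s
  | And a b => sat a s /\ sat b s
  | EX a => exists s', step s s' /\ sat a s'
  | EU a b => eu (sat a) (sat b) s
  end.

Definition test : ctl := Or (Atom t) (Atom tbar).
Definition phi_diamond : ctl :=
  Or (Or (Atom q0) (Atom q1)) (Or (Atom q2) (Atom q3)).

Definition phi_1 : ctl :=
  And test (EX (And (Atom f) (EF (And (Atom f) (Neg (EX (Atom g))))))).

(* phi i for i >= 1 (phi 0 is an unused dummy). *)
Fixpoint phi (i : nat) : ctl :=
  match i with
  | O => CTrue
  | S j =>
    match j with
    | O => phi_1
    | S _ =>
      And test (EX (EU (And phi_diamond (EX (phi j)))
                       (And (Atom q0) (Neg (EX (Atom q1))))))
    end
  end.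

(* Main.v *)
Require Import Defs.
From Stdlib Require Import ZArith List Lia Classical.
Import ListNotations.
Open Scope nat_scope.

Ltac split_in Hin := lazymatch type of Hin with
 | _ \/ _ => let H1 := fresh "Hin" in destruct Hin as [H1|Hin]; [split_in H1 | split_in Hin]
 | False => contradiction
 | _ => idtac end.

Ltac inv_step H :=
  let k := fresh "k" in let Hk := fresh "Hk" in let Hn := fresh "Hn" in let Hin := fresh "Hin" in
  cbv beta iota delta [step] in H;
  destruct H as [k [Hk [[Hn Hin]|[Hn Hin]]]];
  cbn [In delta_zero delta_pos] in Hin; split_in Hin;
  try discriminate;
  try (match goal with Hn : (0 < 0)%nat |- _ => inversion Hn end);
  repeat match goal with E : (_,_,_) = (_,_,_) |- _ => inversion E; clear E end; subst.

Ltac inlist := cbn [In delta_zero delta_pos]; repeat first [left; reflexivity | right].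

Lemma step_pos q k q' n m : 0 < n -> In (q,k,q') delta_pos ->
  Z.of_nat m = (Z.of_nat n + k)%Z -> step (q,n) (q',m).
Proof. intros H1 H2 H3. exists k. split; auto. Qed.

Lemma step_zero q k q' m : In (q,k,q') delta_zero ->
  Z.of_nat m = (Z.of_nat 0 + k)%Z -> step (q,0) (q',m).
Proof. intros H2 H3. exists k. split; auto. Qed.

Lemma zero_sub_pos x : In x delta_zero -> In x delta_pos.
Proof. cbn [In delta_zero]; intros H; split_in H; subst; inlist. Qed.

Lemma step_both q k q' n m : In (q,k,q') delta_zero ->
  Z.of_nat m = (Z.of_nat n + k)%Z -> step (q,n) (q',m).
Proof. intros H2 H3. exists k. split; auto. destruct n; [left|right]; split; auto; try lia.
  apply zero_sub_pos; auto. Qed.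

Lemma sat_Or a b s : sat (Or a b) s <-> sat a s \/ sat b s.
Proof. simpl. split.
  - intro H. destruct (classic (sat a s)); auto. destruct (classic (sat b s)); auto.
    exfalso; apply H; auto.
  - intros [H|H] [H1 H2]; auto.
Qed.

Lemma test_iff q n : sat test (q,n) <-> q = t \/ q = tbar.
Proof. unfold test; rewrite sat_Or; simpl; tauto. Qed.

Lemma diamond_iff q m : sat phi_diamond (q,m) <-> q = q0 \/ q = q1 \/ q = q2 \/ q = q3.
Proof. unfold phi_diamond; rewrite !sat_Or; simpl; tauto. Qed.

Lemma Q_iff q m : sat (And (Atom q0) (Neg (EX (Atom q1)))) (q,m) <-> q = q0 /\ m = 0.
Proof. simpl. split.
- intros [-> H]. split; auto. destruct m; auto. exfalso; apply H. exists (q1, m). split; [|reflexivity].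
  apply step_pos with (k:=(-1)%Z); [lia|inlist|lia].
- intros [-> ->]. split; auto. intros [[q' m'] [Hs Hq]]. inv_step Hs.
Qed.

Lemma modS b m : 0 < b -> (m mod b + 1 < b /\ S m mod b = m mod b + 1) \/ (m mod b + 1 = b /\ S m mod b = 0).
Proof. intros Hb. pose proof (Nat.div_mod_eq m b). pose proof (Nat.mod_upper_bound m b ltac:(lia)).
  set (r := m mod b) in *. set (q := m / b) in *.
  destruct (Nat.eq_dec (r+1) b).
  - right; split; auto. symmetry; apply (Nat.mod_unique _ _ (q+1)); [lia|]. rewrite Nat.mul_add_distr_l. lia.
  - left; split; [lia|]. symmetry; apply (Nat.mod_unique _ _ q); lia.
Qed.
Definition Qf := sat (And (Atom f) (Neg (EX (Atom g)))).

Lemma Qf_iff q m : Qf (q,m) <-> q = f /\ m = 0.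
Proof. unfold Qf; simpl. split.
- intros [-> H]. split; auto. destruct m; auto. exfalso; apply H. exists (g, m). split; [|reflexivity].
  apply step_pos with (k:=(-1)%Z); [lia|inlist|lia].
- intros [-> ->]. split; auto. intros [[q' m'] [Hs Hq]]. inv_step Hs.
Qed.

Lemma eu_fg_fwd s : eu (sat CTrue) Qf s ->
  (fst s = f -> snd s mod 2 = 0) /\ (fst s = g -> snd s mod 2 = 1).
Proof. induction 1 as [s HQ|s s' _ Hs _ IH].
- destruct s as [q m]. apply Qf_iff in HQ as [-> ->]. cbn [fst snd]; split; intros; [reflexivity|discriminate].
- destruct s as [q m]; destruct s' as [q' m']. cbn [fst snd] in *.
  destruct q; split; intros E; try discriminate; inv_step Hs; cbn [fst snd] in IH;
  destruct m as [|m]; try lia; replace m' with m in * by lia;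
  destruct (modS 2 m ltac:(lia)) as [[? ?]|[? ?]]; try lia;
  first [destruct IH as [_ IH]; specialize (IH eq_refl); lia | destruct IH as [IH _]; specialize (IH eq_refl); lia].
Qed.

Lemma eu_fg_bwd m : (m mod 2 = 0 -> eu (sat CTrue) Qf (f,m)) /\ (m mod 2 = 1 -> eu (sat CTrue) Qf (g,m)).
Proof. induction m as [|m [IH1 IH2]]; split; intro H.
  - apply eu_now. apply Qf_iff; auto.
  - simpl in H. discriminate.
  - apply eu_step with (g,m); [exact I| apply step_pos with (k:=(-1)%Z); [lia|inlist|lia] |].
    apply IH2. destruct (modS 2 m ltac:(lia)) as [[? ?]|[? ?]]; lia.
  - apply eu_step with (f,m); [exact I| apply step_pos with (k:=(-1)%Z); [lia|inlist|lia] |].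
    apply IH1. destruct (modS 2 m ltac:(lia)) as [[? ?]|[? ?]]; lia.
Qed.

Lemma eu_fg m : (eu (sat CTrue) Qf (f,m) <-> m mod 2 = 0) /\ (eu (sat CTrue) Qf (g,m) <-> m mod 2 = 1).
Proof. split; split; try (intro H; apply eu_fg_fwd in H; destruct H as [H1 H2]; cbn [fst snd] in *; auto; fail);
  apply eu_fg_bwd.
Qed.

Lemma div_mod b n : b <> 0 -> Nat.divide b n <-> n mod b = 0.
Proof. intros; symmetry; apply Nat.Lcm0.mod_divide. Qed.

Lemma base n : (sat phi_1 (t, n) <-> Nat.divide (2 ^ 1) n) /\
  (sat phi_1 (tbar, n) <-> ~ Nat.divide (2 ^ 1) n).
Proof. change (2^1) with 2. rewrite div_mod by lia. unfold phi_1. split; split.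
- intros [_ [[q' m'] [Hs [Hf HEF]]]]. simpl in Hf; subst q'. inv_step Hs;
  first [replace m' with n in * by lia | replace m' with 0 in * by lia]; apply (proj1 (eu_fg _)); exact HEF.
- intros H. split; [apply test_iff; auto|]. exists (f,n). split.
  + apply step_both with (k:=0%Z); [inlist|lia].
  + split; [reflexivity|]. apply (proj1 (eu_fg n)); auto.
- intros [_ [[q' m'] [Hs [Hf HEF]]]]. simpl in Hf; subst q'. inv_step Hs.
  destruct n as [|n]; [lia|]. replace m' with n in * by lia.
  apply (proj1 (eu_fg n)) in HEF. destruct (modS 2 n ltac:(lia)) as [[? ?]|[? ?]]; lia.
- intros H. destruct n as [|n]; [simpl in H; lia|].
  split; [apply test_iff; auto|]. exists (f,n). split.
  + apply step_pos with (k:=(-1)%Z); [lia|inlist|lia].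
  + split; [reflexivity|]. apply (proj1 (eu_fg n)). destruct (modS 2 n ltac:(lia)) as [[? ?]|[? ?]]; lia.
Qed.
Fixpoint G (d : nat) (q : loc) (m : nat) : Prop :=
 match m with
 | 0 => q = q0
 | S m' => match q with
   | q0 => Nat.divide d (S m') /\ G d q1 m'
   | q1 => ~ Nat.divide d (S m') /\ (G d q2 m' \/ G d q1 m')
   | q2 => Nat.divide d (S m') /\ G d q3 m'
   | q3 => ~ Nat.divide d (S m') /\ (G d q0 m' \/ G d q3 m')
   | _ => False end end.

Lemma G_other d q m : q <> q0 -> q <> q1 -> q <> q2 -> q <> q3 -> ~ G d q m.
Proof. intros; destruct m; simpl; destruct q; congruence. Qed.

Definition Pp psi := sat (And phi_diamond (EX psi)).
Definition Qq := sat (And (Atom q0) (Neg (EX (Atom q1)))).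


Lemma P_char psi d
  (Ht : forall n, sat psi (t,n) <-> Nat.divide d n)
  (Htb : forall n, sat psi (tbar,n) <-> ~ Nat.divide d n)
  (Ho : forall s, sat psi s -> fst s = t \/ fst s = tbar) q m :
  Pp psi (q,m) ->
  0 < m /\ ((q = q0 \/ q = q2) /\ Nat.divide d m \/ (q = q1 \/ q = q3) /\ ~ Nat.divide d m).
Proof.
  unfold Pp. intros [Hd [[q' m'] [Hs Hp]]]. apply diamond_iff in Hd.
  pose proof (Ho _ Hp) as Ho'. cbn [fst] in Ho'.
  destruct Hd as [ -> | [ -> | [ -> | -> ] ] ]; inv_step Hs; try (destruct Ho' as [Ho'|Ho']; discriminate);
  replace m' with m in * by lia; split; auto;
  first [rewrite Ht in Hp | rewrite Htb in Hp]; auto.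
Qed.

Lemma eu_G psi d
  (Ht : forall n, sat psi (t,n) <-> Nat.divide d n)
  (Htb : forall n, sat psi (tbar,n) <-> ~ Nat.divide d n)
  (Ho : forall s, sat psi s -> fst s = t \/ fst s = tbar) q m :
  eu (Pp psi) Qq (q,m) <-> G d q m.
Proof. split.
- intro H. remember (q,m) as s eqn:Es. revert q m Es. induction H as [s HQ|s s' HP Hs _ IH]; intros q m Es; subst s.
  + apply Q_iff in HQ as [-> ->]. reflexivity.
  + destruct s' as [q' m']. specialize (IH q' m' eq_refl).
    pose proof (P_char psi d Ht Htb Ho q m HP) as [Hm Hc].
    destruct m as [|m]; [lia|].
    destruct Hc as [[[ -> | -> ] Hdv]|[[ -> | -> ] Hdv]]; inv_step Hs;
      try (exfalso; revert IH; apply G_other; discriminate);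
      replace m' with m in * by lia; simpl; auto.
- revert q; induction m as [|m IH]; intros q HG.
  + simpl in HG; subst. apply eu_now. apply Q_iff; auto.
  + destruct q; simpl in HG; try contradiction.
    * destruct HG as [Hd HG]. apply eu_step with (q1,m); [|apply step_pos with (k:=(-1)%Z); [lia|inlist|lia]|auto].
      split; [apply diamond_iff; auto|]. exists (t, S m). split; [apply step_pos with (k:=0%Z); [lia|inlist|lia]|apply Ht; auto].
    * destruct HG as [Hd [HG|HG]]; [apply eu_step with (q2,m)|apply eu_step with (q1,m)];
      try (apply step_pos with (k:=(-1)%Z); [lia|inlist|lia]); auto;
      (split; [apply diamond_iff; auto|]; exists (tbar, S m); split; [apply step_pos with (k:=0%Z); [lia|inlist|lia]|apply Htb; auto]).
    * destruct HG as [Hd HG]. apply eu_step with (q3,m); [|apply step_pos with (k:=(-1)%Z); [lia|inlist|lia]|auto].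
      split; [apply diamond_iff; auto 10|]. exists (t, S m). split; [apply step_pos with (k:=0%Z); [lia|inlist|lia]|apply Ht; auto].
    * destruct HG as [Hd [HG|HG]]; [apply eu_step with (q0,m)|apply eu_step with (q3,m)];
      try (apply step_pos with (k:=(-1)%Z); [lia|inlist|lia]); auto;
      (split; [apply diamond_iff; auto 10|]; exists (tbar, S m); split; [apply step_pos with (k:=0%Z); [lia|inlist|lia]|apply Htb; auto]).
Qed.
Lemma div_2d d x : 2 <= d -> Nat.divide d x <-> x mod (2*d) = 0 \/ x mod (2*d) = d.
Proof. intros Hd. rewrite div_mod by lia. rewrite (Nat.mul_comm 2 d), Nat.Div0.mod_mul_r.
  pose proof (Nat.mod_upper_bound x d ltac:(lia)). pose proof (Nat.mod_upper_bound (x/d) 2 ltac:(lia)).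
  destruct ((x / d) mod 2) as [|[|e]]; [..|lia]; lia.
Qed.

Lemma G_arith d : 2 <= d -> forall m,
  (G d q0 m <-> m mod (2*d) = 0) /\ (G d q1 m <-> d < m mod (2*d)) /\
  (G d q2 m <-> m mod (2*d) = d) /\ (G d q3 m <-> 0 < m mod (2*d) < d).
Proof. intros Hd. induction m as [|m [I0 [I1 [I2 I3]]]].
- rewrite Nat.Div0.mod_0_l. simpl. repeat split; intros; try discriminate; try lia.
- cbn [G]. rewrite !div_2d by lia. rewrite I0, I1, I2, I3.
  pose proof (Nat.mod_upper_bound m (2*d) ltac:(lia)).
  destruct (modS (2*d) m ltac:(lia)) as [[? E]|[? E]]; rewrite E; repeat split; intros; lia.
Qed.

Lemma test_only j s : sat (phi (S j)) s -> fst s = t \/ fst s = tbar.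
Proof. destruct s as [q n]. destruct j; [unfold phi, phi_1|]; intros [H _]; apply test_iff in H; auto. Qed.

Lemma main_step psi d (Hd : 2 <= d)
  (Ht : forall n, sat psi (t,n) <-> Nat.divide d n)
  (Htb : forall n, sat psi (tbar,n) <-> ~ Nat.divide d n)
  (Ho : forall s, sat psi s -> fst s = t \/ fst s = tbar) n :
  (sat (And test (EX (EU (And phi_diamond (EX psi)) (And (Atom q0) (Neg (EX (Atom q1))))))) (t,n)
     <-> Nat.divide (2*d) n) /\
  (sat (And test (EX (EU (And phi_diamond (EX psi)) (And (Atom q0) (Neg (EX (Atom q1))))))) (tbar,n)
     <-> ~ Nat.divide (2*d) n).
Proof.
  pose proof (eu_G psi d Ht Htb Ho) as EG. unfold Pp, Qq in EG.
  pose proof (G_arith d Hd) as GA.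
  rewrite (div_mod (2*d)) by lia.
  assert (Gno : forall q m, q <> q0 -> q <> q1 -> q <> q2 -> q <> q3 -> ~ eu (sat (And phi_diamond (EX psi))) (sat (And (Atom q0) (Neg (EX (Atom q1))))) (q,m)).
  { intros q m a b c e H. apply EG in H. revert H. apply G_other; auto. }
  change (sat (And test ?X) ?s) with (sat test s /\ sat X s).
  change (sat (EX ?X) ?s) with (exists s', step s s' /\ sat X s').
  change (sat (EU ?a ?b)) with (eu (sat a) (sat b)).
  split; split.
- intros [_ [[q' m'] [Hs HE]]]. inv_step Hs;
  try (exfalso; revert HE; apply Gno; discriminate);
  apply EG in HE; first [replace m' with n in * by lia | replace m' with 0 in * by lia]; apply GA; auto.
- intros H. split; [apply test_iff; auto|]. exists (q0,n). split.
  + apply step_both with (k:=0%Z); [inlist|lia].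
  + apply EG, GA; auto.
- intros [_ [[q' m'] [Hs HE]]]. inv_step Hs;
  try (exfalso; revert HE; apply Gno; discriminate);
  apply EG in HE; replace m' with n in * by lia; destruct (GA n) as [_ [A1 [A2 A3]]];
  first [apply A1 in HE | apply A2 in HE | apply A3 in HE]; lia.
- intros H. destruct n as [|n]; [rewrite Nat.Div0.mod_0_l in H; lia|].
  split; [apply test_iff; auto|].
  destruct (GA (S n)) as [_ [A1 [A2 A3]]].
  pose proof (Nat.mod_upper_bound (S n) (2*d) ltac:(lia)).
  destruct (Nat.lt_trichotomy (S n mod (2*d)) d) as [Hl|[Hl|Hl]].
  + exists (q3, S n). split; [apply step_pos with (k:=0%Z); [lia|inlist|lia]|]. apply EG, A3; lia.
  + exists (q2, S n). split; [apply step_pos with (k:=0%Z); [lia|inlist|lia]|]. apply EG, A2; lia.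
  + exists (q1, S n). split; [apply step_pos with (k:=0%Z); [lia|inlist|lia]|]. apply EG, A1; lia.
Qed.

Theorem lemma1 : forall (n i : nat), (1 <= i)%nat ->
  (sat (phi i) (t, n) <-> Nat.divide (2 ^ i) n) /\
  (sat (phi i) (tbar, n) <-> ~ Nat.divide (2 ^ i) n).
Proof.
  intros n i Hi. destruct i as [|j]; [lia|]. clear Hi. revert n. induction j as [|j IH]; intro n.
  - apply base.
  - change (phi (S (S j))) with (And test (EX (EU (And phi_diamond (EX (phi (S j)))) (And (Atom q0) (Neg (EX (Atom q1))))))).
    rewrite (Nat.pow_succ_r' 2 (S j)).
    apply main_step.
    + rewrite Nat.pow_succ_r'. pose proof (Nat.pow_nonzero 2 j). lia.
    + intro m; apply (IH m).
    + intro m; apply (IH m).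
    + apply test_only.
Qed.
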